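(* Let $\theta:(0,\infty)\to\mathbb{R}$ satisfy $0<\theta(x)\le 2\arctan(x/2)$ for all $x>0$. Then for all $\Lambda\ge 0$, $m>0$ and $\Delta t>0$ satisfying $\Delta t^2\Lambda/m<4$, we have $$\left|\cos(\theta(x))-\frac{\Delta t^2(\Lambda/m)}{2}\,\frac{\sin(\theta(x))}{x}\right|<1\quad\text{for all }x>0.$$ *)

(* Defs.v *)
From Stdlib Require Export Reals.

(* Main.v *)
Require Import Defs.
From Stdlib Require Import Reals.
From Stdlib Require Import Lra Psatz.
Open Scope R_scope.

Theorem corollary1 (theta : R -> R)
  (Htheta : forall x : R, 0 < x -> 0 < theta x /\ theta x <= 2 * atan (x / 2))
  (Lambda m dt : R)
  (HL : 0 <= Lambda) (Hm : 0 < m) (Hdt : 0 < dt)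
  (Hcfl : dt ^ 2 * Lambda / m < 4) :
  forall x : R, 0 < x ->
    Rabs (cos (theta x) - (dt ^ 2 * (Lambda / m)) / 2 * (sin (theta x) / x)) < 1.
Proof.
  intros x Hx.
  destruct (Htheta x Hx) as [H1 H2].
  set (u := theta x / 2).
  assert (Ht : theta x = 2 * u) by (unfold u; field).
  assert (Hb := atan_bound (x/2)).
  assert (Hpi := PI_RGT_0).
  assert (Hu0 : 0 < u) by (unfold u; lra).
  assert (Hu1 : u <= atan (x/2)) by (unfold u; lra).
  assert (Htan : tan u <= x / 2).
  { destruct (Req_dec u (atan (x/2))) as [E|E].
    - rewrite E, atan_right_inv; lra.
    - rewrite <- (atan_right_inv (x/2)).
      left; apply tan_increasing; lra. }
  assert (Hc : 0 < cos u) by (apply cos_gt_0; lra).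
  assert (Hs : 0 < sin u) by (apply sin_gt_0; lra).
  assert (Hsc : sin u <= x / 2 * cos u).
  { unfold tan in Htan.
    apply (Rmult_le_compat_r (cos u)) in Htan; [|lra].
    replace (sin u / cos u * cos u) with (sin u) in Htan by (field; lra).
    lra. }
  assert (Hpy := sin2_cos2 u). unfold Rsqr in Hpy.
  rewrite Ht, sin_2a, cos_2a_cos.
  set (k := dt ^ 2 * (Lambda / m) / 2).
  assert (Hk0 : 0 <= k).
  { unfold k. apply Rmult_le_pos; [|lra]. apply Rmult_le_pos.
    - apply pow_le; lra.
    - apply Rmult_le_pos; [lra| left; apply Rinv_0_lt_compat; lra]. }
  assert (Hk1 : k < 2).
  { unfold k. unfold Rdiv in *. lra. }
  set (w := sin u / x).
  assert (Hw : 0 < w) by (unfold w; apply Rdiv_lt_0_compat; lra).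
  assert (Hw2 : 2 * w <= cos u).
  { unfold w. apply (Rmult_le_reg_r x); [lra|].
    replace (2 * (sin u / x) * x) with (2 * sin u) by (field; lra). nra. }
  replace (2 * sin u * cos u / x) with (2 * cos u * w) by (unfold w; field; lra).
  apply Rabs_def1.
  - assert (cos u * cos u < 1) by nra.
    assert (0 <= k * (2 * cos u * w)).
    { apply Rmult_le_pos; [lra|]. apply Rmult_le_pos; lra. }
    lra.
  - assert (k * w < cos u) by nra.
    nra.
Qed.
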